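(* Let $k_1,k_2\in\mathbb N$ with $k_1<k_2$. For parameters $(N,D,b,r)$ with $N\in\mathbb N$, $D>0$, $b=(b_1,\dots,b_N)$ with $b_i>0$, and $r=(r_1,\dots,r_N)$ with $0<r_1<\cdots<r_N$, let $$P_N^k(\lambda)=\Big(D+\frac{\lambda^2}{(2k-1)^2}\Big)\prod_{j=1}^N(\lambda+r_j)-\sum_{i=1}^N b_i\prod_{1\le j\le N,\,j\ne i}(\lambda+r_j).$$ Then the two multisets of complex roots (counted with multiplicity) of $P_N^{k_1}$ and of $P_N^{k_2}$ uniquely determine $N$, $D$, $r_1,\dots,r_N$ and $b_1,\dots,b_N$: if $(N,D,b,r)$ and $(N',D',b',r')$ are two admissible parameter sets whose polynomials $P^{k_1}$ have the same root multiset and whose polynomials $P^{k_2}$ have the same root multiset, then $N=N'$, $D=D'$, $r=r'$ and $b=b'$. In particular the relaxation function $G(t)=\sum_{i=1}^N s_ie^{-r_it}$ with $s_i=b_i/r_i$ is uniquely determined.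
   Context: The roots of $P_N^k$ are the eigenvalues (the ''cluster'' indexed by $k$) of the reduced eigenvalue problem $\lambda U=A^k_{N+2}U$, obtained from the extended Burgers viscoacoustic system $u'=v$, $v'=D\partial_x^2u+\sum_i b_iw_i$, $w_i'=\partial_x^2u-r_iw_i$ on $(0,\pi/2)$ with $u(0)=0$, $\partial_xu(\pi/2)=0$, by replacing $\partial_x^2$ with its eigenvalue $-(2k-1)^2$. Here $b_i=s_ir_i$ where $G(t)=\sum_i s_ie^{-r_it}$ is the Prony-series relaxation function; $D>0$ is treated as an independent parameter. *)

(* Defs.v *)
From HB Require Import structures.
From mathcomp Require Import all_boot all_order all_algebra.
From mathcomp Require Import complex.
From mathcomp Require Import Rstruct.
From Stdlib Require Rdefinitions.
Notation R := Rdefinitions.R.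
Set Implicit Arguments. Unset Strict Implicit. Unset Printing Implicit Defensive.
Import Order.TTheory GRing.Theory Num.Theory.
Local Open Scope ring_scope.
Local Open Scope complex_scope.

Definition cst (x : R) : {poly R[i]} := (x%:C)%:P.

Definition Ppoly (k N : nat) (D : R) (b r : seq R) : {poly R[i]} :=
  (cst D + cst ((((2 * k).-1)%:R : R) ^+ 2)^-1 * 'X^2)
    * \prod_(j < N) ('X + cst (nth 0 r j))
  - \sum_(i < N) cst (nth 0 b i) * \prod_(j < N | j != i) ('X + cst (nth 0 r j)).

Definition admissible (N : nat) (D : R) (b r : seq R) : Prop :=
  [/\ 0 < D, size b = N, size r = N,
      (forall i, (i < N)%N -> 0 < nth 0 b i /\ 0 < nth 0 r i)
    & (forall i j, (i < j < N)%N -> nth 0 r i < nth 0 r j)].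

Definition same_roots (p q : {poly R[i]}) : Prop :=
  forall z : R[i], mup z p = mup z q.

(* Main.v *)
Require Import Defs.
From HB Require Import structures.
From mathcomp Require Import all_boot all_order all_algebra.
From mathcomp Require Import complex.
From mathcomp Require Import Rstruct.
From mathcomp Require Import ring.
Set Implicit Arguments. Unset Strict Implicit. Unset Printing Implicit Defensive.
Import Order.TTheory GRing.Theory Num.Theory.
Local Open Scope ring_scope.
Local Open Scope complex_scope.

Lemma mupZ (F : closedFieldType) (c : F) (p : {poly F}) x : c != 0 -> mup x (c *: p) = mup x p.
Proof.
move=> c0; have [->|p0] := eqVneq p 0; first by rewrite scaler0.
by rewrite -mul_polyC mupM ?polyC_eq0 // mupNroot // /root hornerC.
Qed.

Lemma same_mup_eq (F : closedFieldType) (p q : {poly F}) :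
  p != 0 -> lead_coef p = lead_coef q -> (forall z, mup z p = mup z q) -> p = q.
Proof.
move=> p0 lpq hm.
have [s Hs] := closed_field_poly_normal p.
have [t Ht] := closed_field_poly_normal q.
have l0 : lead_coef p != 0 by rewrite lead_coef_eq0.
have : perm_eq s t.
  apply/allP => x _ /=; apply/eqP.
  by have := hm x; rewrite Hs Ht -lpq !mupZ // !mu_prod_XsubC.
move=> hp.
by rewrite Hs Ht -lpq (perm_big _ hp).
Qed.

Definition Qp N (r : seq R) : {poly R[i]} := \prod_(j < N) ('X + cst (nth 0 r j)).
Definition Sp N (b r : seq R) : {poly R[i]} :=
  \sum_(i < N) cst (nth 0 b i) * \prod_(j < N | j != i) ('X + cst (nth 0 r j)).
Definition ck (k : nat) : R := ((((2 * k).-1)%:R : R) ^+ 2)^-1.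

Lemma PpolyE k N D b r : Ppoly k N D b r = (cst D + cst (ck k) * 'X^2) * Qp N r - Sp N b r.
Proof. by []. Qed.

Lemma size_prodP N (P : pred 'I_N) (c : 'I_N -> R[i]) :
  size (\prod_(j < N | P j) ('X + (c j)%:P)) = #|P|.+1.
Proof.
rewrite size_prod; last by move=> j _; rewrite -size_poly_eq0 size_XaddC.
rewrite (eq_bigr (fun _ => 2%N)); last by move=> j _; rewrite size_XaddC.
by rewrite sum_nat_const muln2 -addnn -addSn addnK.
Qed.

Lemma Qp_monic N r : Qp N r \is monic.
Proof. by apply: monic_prod => j _; apply: monicXaddC. Qed.

Lemma size_Qp N r : size (Qp N r) = N.+1.
Proof. by rewrite /Qp size_prodP cardT size_enum_ord. Qed.

Lemma size_Sp N b r : (size (Sp N b r) <= N)%N.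
Proof.
rewrite /Sp; apply: (big_ind (fun p : {poly R[i]} => (size p <= N)%N)).
- by rewrite size_poly0.
- by move=> p q hp hq; apply: leq_trans (size_polyD _ _) _; rewrite geq_max hp hq.
move=> i _; rewrite /cst mul_polyC; apply: leq_trans (size_scale_leq _ _) _.
rewrite size_prodP.
have -> : #|(fun j : 'I_N => j != i)| = #|predC1 i| by apply: eq_card.
by rewrite cardC1 card_ord; case: N i => [[]|].
Qed.

Lemma ck_neq0 k : (0 < k)%N -> ck k != 0.
Proof.
move=> k0; rewrite /ck invr_eq0 expf_eq0 /= pnatr_eq0.
by case: k k0 => // k _; rewrite mulnS.
Qed.

Lemma ck_inj k1 k2 : (0 < k1)%N -> (k1 < k2)%N -> ck k1 != ck k2.
Proof.
move=> k0 k12; apply/eqP => /invr_inj /eqP.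
rewrite -!natrX eqr_nat eqn_exp2r // => /eqP.
case: k1 k0 k12 => // k1 _; case: k2 => // k2 k12.
rewrite !mulnS /= => /eqP; rewrite eqSS => /eqP.
move=> h; have : (2 * k1 == 2 * k2)%N by rewrite h.
by rewrite eqn_mul2l /= => /eqP ?; subst; rewrite ltnn in k12.
Qed.

Lemma cst_inj x y : cst x = cst y -> x = y.
Proof. by move/polyC_inj/complexI. Qed.

Lemma Acoef k D : (0 < k)%N ->
  size (cst D + cst (ck k) * 'X^2) = 3%N /\ lead_coef (cst D + cst (ck k) * 'X^2) = (ck k)%:C.
Proof.
move=> k0.
have c0 : (ck k)%:C != 0 by rewrite (inj_eq (@complexI R)) ck_neq0.
have s3 : size (cst (ck k) * 'X^2) = 3%N by rewrite /cst mul_polyC size_scale // size_polyXn.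
have sl : (size (cst D) < size (cst (ck k) * 'X^2)%R)%N.
  by rewrite s3; apply: leq_ltn_trans (size_polyC_leq1 _) _.
rewrite addrC size_polyDl // lead_coefDl // s3; split => //.
by rewrite /cst mul_polyC lead_coefZ lead_coefXn mulr1.
Qed.

Lemma Ppoly_lead k N D b r : (0 < k)%N ->
  size (Ppoly k N D b r) = N.+3 /\ lead_coef (Ppoly k N D b r) = (ck k)%:C.
Proof.
move=> k0; have [sA lA] := Acoef D k0.
have A0 : cst D + cst (ck k) * 'X^2 != 0 by rewrite -size_poly_eq0 sA.
have sAQ : size ((cst D + cst (ck k) * 'X^2) * Qp N r) = N.+3.
  by rewrite size_Mmonic ?Qp_monic // sA size_Qp.
have lt : (size (- Sp N b r)%R < size ((cst D + cst (ck k) * 'X^2) * Qp N r)%R)%N.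
  by rewrite size_polyN sAQ; apply: leq_ltn_trans (size_Sp N b r) _; rewrite ltnS; apply: leq_trans (leqnSn _) (leqnSn _).
rewrite PpolyE size_polyDl // lead_coefDl // sAQ lead_coef_Mmonic ?Qp_monic //.
Qed.

Lemma Qp_horner N r z : (Qp N r).[z] = \prod_(j < N) (z + (nth 0 r j)%:C).
Proof. by rewrite /Qp horner_prod; apply: eq_bigr => j _; rewrite hornerD hornerX hornerC. Qed.

Lemma Qp_mem N r r' x : size r = N -> size r' = N -> Qp N r = Qp N r' -> x \in r -> x \in r'.
Proof.
move=> sr sr' eQ /(nthP 0) [i ir <-].
have iN : (i < N)%N by rewrite -sr.
have : (Qp N r).[- (nth 0 r i)%:C] == 0.
  rewrite Qp_horner; apply/prodf_eq0; exists (Ordinal iN) => //=.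
  by rewrite addrC subrr.
rewrite eQ Qp_horner => /prodf_eq0 [j _]; rewrite addrC subr_eq0 => /eqP /complexI <-.
by apply: mem_nth; rewrite sr'.
Qed.

Lemma sorted_of N (r : seq R) : size r = N ->
  (forall i j, (i < j < N)%N -> nth 0 r i < nth 0 r j) -> sorted <%O r.
Proof.
move=> sr h; apply/(sortedP 0) => i hi; apply: h; rewrite ltnSn -sr //.
Qed.

Lemma Sp_horner N b r (i : 'I_N) :
  (forall j k : 'I_N, j != k -> nth 0 r j != nth 0 r k) ->
  (Sp N b r).[- (nth 0 r i)%:C] =
    (nth 0 b i)%:C * \prod_(j < N | j != i) (- (nth 0 r i)%:C + (nth 0 r j)%:C).
Proof.
move=> dis; rewrite /Sp horner_sum (bigD1 i) //= [X in _ + X]big1 ?addr0.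
  rewrite hornerM hornerC horner_prod; congr (_ * _).
  by apply: eq_bigr => j _; rewrite hornerD hornerX hornerC.
move=> k ki; rewrite hornerM horner_prod (bigD1 i) 1?eq_sym //=.
by rewrite hornerD hornerX /cst !hornerC addNr mul0r mulr0.
Qed.

Lemma Sp_prod_neq0 N (r : seq R) (i : 'I_N) :
  (forall j k : 'I_N, j != k -> nth 0 r j != nth 0 r k) ->
  \prod_(j < N | j != i) (- (nth 0 r i)%:C + (nth 0 r j)%:C) != 0.
Proof.
move=> dis; apply/prodf_neq0 => j ji; rewrite addrC subr_eq0 (inj_eq (@complexI R)).
exact: dis.
Qed.

Lemma diff_id (T : comPzRingType) (d c1 c2 x q s : T) :
  ((d + c1 * x) * q - s) - ((d + c2 * x) * q - s) = ((c1 - c2) * x) * q.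
Proof. by ring. Qed.

Lemma diff2 (T : comPzRingType) (d d' c x q s s' : T) :
  (d + c * x) * q - s = (d' + c * x) * q - s' -> (d - d') * q = s - s'.
Proof.
move=> H; rewrite (_ : (d - d') * q = ((d + c * x) * q - s) - ((d' + c * x) * q - s') + s - s').
  by rewrite H subrr add0r.
by ring.
Qed.

Lemma distinct_of N (r : seq R) :
  (forall i j, (i < j < N)%N -> nth 0 r i < nth 0 r j) ->
  forall j k : 'I_N, j != k -> nth 0 r j != nth 0 r k.
Proof.
move=> h j k; rewrite -(inj_eq val_inj) /=; case: ltngtP => // jk _.
  by rewrite lt_eqF // h // jk ltn_ord.
by rewrite gt_eqF // h // jk ltn_ord.
Qed.

Theorem theorem7p1 (k1 k2 : nat) (N N' : nat) (D D' : R) (b r b' r' : seq R) :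
  (0 < k1)%N -> (k1 < k2)%N ->
  admissible N D b r -> admissible N' D' b' r' ->
  same_roots (Ppoly k1 N D b r) (Ppoly k1 N' D' b' r') ->
  same_roots (Ppoly k2 N D b r) (Ppoly k2 N' D' b' r') ->
  [/\ N = N', D = D', r = r' & b = b'].
Proof.
move=> k10 k12 [D0 sb sr pos inc] [D0' sb' sr' pos' inc'] h1 h2.
have k20 : (0 < k2)%N by apply: leq_trans k12.
have eqP_ k : (0 < k)%N -> same_roots (Ppoly k N D b r) (Ppoly k N' D' b' r') ->
    Ppoly k N D b r = Ppoly k N' D' b' r'.
  move=> k0 h; have [s1 l1] := Ppoly_lead N D b r k0; have [s2 l2] := Ppoly_lead N' D' b' r' k0.
  apply: same_mup_eq => //; first by rewrite -size_poly_eq0 s1.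
  by rewrite l1 l2.
have E1 := eqP_ _ k10 h1; have E2 := eqP_ _ k20 h2.
have NN : N = N'.
  have [s1 _] := Ppoly_lead N D b r k10; have [s2 _] := Ppoly_lead N' D' b' r' k10.
  by move: s1; rewrite E1 s2 => -[].
move: sb' sr' pos' inc' E1 E2 h1 h2; subst N' => sb' sr' pos' inc' E1 E2 h1 h2.
have EQ : Qp N r = Qp N r'.
  have := congr2 (fun p q => p - q) E1 E2; rewrite /= !PpolyE !diff_id.
  move=> H; apply: (mulfI _ H); rewrite mulf_neq0 ?expf_neq0 ?polyX_eq0 // subr_eq0.
  by apply/negP => /eqP /cst_inj /eqP; apply/negP; apply: ck_inj.
have rr : r = r'.
  apply: lt_sorted_eq; [exact: sorted_of sr inc | exact: sorted_of sr' inc' |].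
  move=> x; apply/idP/idP; [exact: (Qp_mem sr sr' EQ) | exact: (Qp_mem sr' sr (esym EQ))].
subst r'.
have dis := distinct_of inc.
have DD : D = D'.
  apply/eqP; apply/negP => /negP nD.
  move: E1; rewrite !PpolyE => /diff2 E.
  have : size ((cst D - cst D') * Qp N r) = N.+1.
    rewrite size_Mmonic ?Qp_monic ?size_Qp //; last first.
      by rewrite subr_eq0; apply/negP => /eqP /cst_inj /eqP; apply/negP.
    by rewrite /cst -polyCB size_polyC subr_eq0 (inj_eq (@complexI R)) nD.
  rewrite E => hs; have := size_polyD (Sp N b r) (- Sp N b' r).
  by rewrite hs size_polyN leq_max !ltnNge !size_Sp.
subst D'.
have ES : Sp N b r = Sp N b' r.
  by move: E1; rewrite !PpolyE => /addrI /oppr_inj.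
split => //; apply: (eq_from_nth (x0 := 0)); first by rewrite sb sb'.
move=> i; rewrite sb => iN.
pose o := Ordinal iN.
have : (Sp N b r).[- (nth 0 r o)%:C] = (Sp N b' r).[- (nth 0 r o)%:C] by rewrite ES.
rewrite !Sp_horner // => /mulIf H.
by apply: complexI; apply: H; apply: Sp_prod_neq0.
Qed.
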